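(* Let $\mathbb{R}^n$ be endowed with the Euclidean norm $\|\cdot\|_2$, let $A\in\mathbb{R}^{m\times n}$ have at least two different columns, and let $f:\mathbb{R}^m\to\mathbb{R}\cup\{\infty\}$ be a differentiable convex function with $\mathrm{conv}(A)\subseteq\mathrm{dom}(f)$ and $\frac{L_{f,A}}{\mu^\star_{f,A}}<\infty$. Let $x_0\in\Delta_{n-1}$ and for $k=0,1,\dots$ let \[ x_{k+1}=\operatorname*{argmin}_{x\in\Delta_{n-1}}\left\{f(Ax_k)+\langle\nabla f(Ax_k),A(x-x_k)\rangle+\frac{L_{f,A}}{2}\|x-x_k\|_2^2\right\}. \] Then for all $k\ge0$ \[ f(Ax_k)-f^\star\le\left(1-\min\left\{\frac{\mu^\star_{f,A}}{4L_{f,A}},\frac12\right\}\right)^k(f(Ax_0)-f^\star). \]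
   Context: $\Delta_{n-1}=\{x\in\mathbb{R}^n_+:\sum_ix_i=1\}$, $\mathrm{conv}(A)=\{Ax:x\in\Delta_{n-1}\}$. For $u\in\mathrm{conv}(A)$, $Z(u)=\{z\in\Delta_{n-1}:Az=u\}$, $\mathrm{dist}(x,Z(u))=\min_{z\in Z(u)}\|x-z\|_2$, and $L_{f,A}=\sup_{u\in\mathrm{conv}(A),\,x\in\Delta_{n-1}\setminus Z(u)}\frac{2(f(Ax)-f(u)-\langle\nabla f(u),Ax-u\rangle)}{\mathrm{dist}(x,Z(u))^2}$. $f^\star=\min_{x\in\Delta_{n-1}}f(Ax)$, $Z^\star=\{z\in\Delta_{n-1}:f(Az)=f^\star\}$, and $\mu^\star_{f,A}=\inf_{x\in\Delta_{n-1}\setminus Z^\star}\frac{2(f(Ax)-f^\star)}{\mathrm{dist}(x,Z^\star)^2}$ with $\mathrm{dist}(x,Z^\star)=\min_{z\in Z^\star}\|x-z\|_2$. *)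

(* Defs.v *)
From HB Require Import structures.
From mathcomp Require Import all_boot all_order all_algebra.
From mathcomp Require Import all_classical all_reals all_analysis.
Unset Printing Implicit Defensive.
Import Order.TTheory GRing.Theory Num.Theory.
Import numFieldNormedType.Exports.
Local Open Scope classical_set_scope.
Local Open Scope ring_scope.


Definition stdsimplex {R : realType} (n : nat) : set 'cV[R]_n :=
  [set x | (forall i, 0 <= x i 0) /\ \sum_i x i 0 = 1].

Definition convcols {R : realType} {m n : nat} (A : 'M[R]_(m, n)) : set 'cV[R]_m :=
  [set u | exists2 x, stdsimplex n x & A *m x = u].

Definition Zfiber {R : realType} {m n : nat} (A : 'M[R]_(m, n)) (u : 'cV[R]_m) : set 'cV[R]_n :=
  [set z | stdsimplex n z /\ A *m z = u].

Definition eucl_norm {R : realType} {n : nat} (x : 'cV[R]_n) : R :=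
  Num.sqrt (\sum_i (x i 0) ^+ 2).

(* dist(x, S) = min_{z in S} ||x - z||_2  (written as an infimum; the
   minimum is attained for the closed nonempty sets used below) *)
Definition eucl_dist {R : realType} {n : nat} (x : 'cV[R]_n) (S : set 'cV[R]_n) : R :=
  inf [set d | exists2 z, S z & d = eucl_norm (x - z)].

Definition freal {R : realType} {m : nat} (f : 'cV[R]_m -> \bar R) : 'cV[R]_m -> R :=
  fun v => fine (f v).

Definition edom {R : realType} {m : nat} (f : 'cV[R]_m -> \bar R) : set 'cV[R]_m :=
  [set u | (f u < +oo)%E].

Definition ext_convex {R : realType} {m : nat} (f : 'cV[R]_m -> \bar R) : Prop :=
  (forall u, f u != -oo%E) /\
  forall (x y : 'cV[R]_m) (t : R), 0 < t < 1 ->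
    (f (t *: x + (1 - t) *: y)%R <= t%:E * f x + (1 - t)%:E * f y)%E.

Definition ext_differentiable_at {R : realType} {m : nat} (f : 'cV[R]_m -> \bar R)
    (u : 'cV[R]_m) : Prop :=
  (\forall v \near u, f v \is a fin_num) /\ differentiable (freal f) u.

Definition LfA {R : realType} {m n : nat} (f : 'cV[R]_m -> \bar R) (A : 'M[R]_(m, n)) : \bar R :=
  ereal_sup [set r%:E | r in
    [set r : R | exists u : 'cV[R]_m, exists x : 'cV[R]_n,
       [/\ convcols A u, stdsimplex n x, ~ Zfiber A u x &
        r = 2 * (freal f (A *m x) - freal f u - 'd (freal f) u (A *m x - u))
            / (eucl_dist x (Zfiber A u)) ^+ 2]]].

(* f^star = min_{x in stdsimplex} f(Ax) (written as an infimum; it is attained) *)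
Definition fstar {R : realType} {m n : nat} (f : 'cV[R]_m -> \bar R) (A : 'M[R]_(m, n)) : R :=
  inf [set r | exists2 x, stdsimplex n x & r = freal f (A *m x)].

Definition Zstar {R : realType} {m n : nat} (f : 'cV[R]_m -> \bar R) (A : 'M[R]_(m, n))
    : set 'cV[R]_n :=
  [set z | stdsimplex n z /\ freal f (A *m z) = fstar f A].

Definition mustar {R : realType} {m n : nat} (f : 'cV[R]_m -> \bar R) (A : 'M[R]_(m, n)) : \bar R :=
  ereal_inf [set r%:E | r in
    [set r : R | exists x : 'cV[R]_n,
       [/\ stdsimplex n x, ~ Zstar f A x &
        r = 2 * (freal f (A *m x) - fstar f A) / (eucl_dist x (Zstar f A)) ^+ 2]]].

(* The rate_factor factor min{ mu^star/(4L), 1/2 }, with the conventions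
   mu^star/(4L) = +oo when L = 0 or mu^star = +oo (0 < mu^star, L finite assumed). *)
Definition rate_factor {R : realType} {m n : nat} (f : 'cV[R]_m -> \bar R) (A : 'M[R]_(m, n)) : R :=
  if (mustar f A \is a fin_num) && (0 < fine (LfA f A))
  then Num.min (fine (mustar f A) / (4 * fine (LfA f A))) (1 / 2)
  else 1 / 2.

Definition step_obj {R : realType} {m n : nat} (f : 'cV[R]_m -> \bar R) (A : 'M[R]_(m, n))
    (L : R) (xk x : 'cV[R]_n) : R :=
  freal f (A *m xk) + 'd (freal f) (A *m xk) (A *m (x - xk))
  + L / 2 * (eucl_norm (x - xk)) ^+ 2.

(* Main.v *)
Require Import Defs.
From HB Require Import structures.
From mathcomp Require Import all_boot all_order all_algebra.
From mathcomp Require Import all_classical all_reals all_analysis.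
From mathcomp Require Import lra ring.
Import Order.TTheory GRing.Theory Num.Theory.
Import numFieldNormedType.Exports.
Local Open Scope classical_set_scope.
Local Open Scope ring_scope.

Section Aux.
Variables (R : realType) (m n : nat) (A : 'M[R]_(m, n)) (f : 'cV[R]_m -> \bar R).

Lemma simplex_conv (a b : 'cV[R]_n) (t : R) : stdsimplex n a -> stdsimplex n b ->
  0 <= t <= 1 -> stdsimplex n (t *: a + (1 - t) *: b).
Proof.
move=> [a0 a1] [b0 b1] /andP[t0 t1]; split.
  move=> i; rewrite !mxE addr_ge0 // mulr_ge0 //; by rewrite subr_ge0.
rewrite (eq_bigr (fun i => t * a i 0 + (1 - t) * b i 0)); last by move=> i _; rewrite !mxE.
by rewrite big_split /= -!mulr_sumr a1 b1 !mulr1 addrC subrK.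
Qed.

Lemma conv_conv (u w : 'cV[R]_m) (t : R) : convcols A u -> convcols A w ->
  0 <= t <= 1 -> convcols A (t *: w + (1 - t) *: u).
Proof.
move=> [a Ha <-] [b Hb <-] ht; exists (t *: b + (1 - t) *: a).
  exact: simplex_conv.
by rewrite mulmxDr !scalemxAr.
Qed.

Hypothesis fconv : ext_convex f.
Hypothesis fdom : convcols A `<=` edom f.

Lemma ffin u : convcols A u -> f u = (freal f u)%:E.
Proof.
move=> /fdom; rewrite /edom /freal /= => fu; rewrite fineK //.
rewrite fin_numE; apply/andP; split; first exact: fconv.1.
by rewrite lt_eqF.
Qed.

Lemma rconv (u w : 'cV[R]_m) (t : R) : convcols A u -> convcols A w -> 0 < t < 1 ->
  freal f (t *: w + (1 - t) *: u) <= t * freal f w + (1 - t) * freal f u.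
Proof.
move=> cu cw ht.
have := fconv.2 w u t ht.
have ht' : 0 <= t <= 1 by case/andP: ht => a b; rewrite ltW // ltW.
rewrite (ffin _ (@conv_conv u w t cu cw ht')) (ffin _ cu) (ffin _ cw) -!EFinM -EFinD lee_fin.
done.
Qed.

Lemma grad_ineq (u w : 'cV[R]_m) : convcols A u -> convcols A w ->
  differentiable (freal f) u ->
  'd (freal f) u (w - u) <= freal f w - freal f u.
Proof.
move=> cu cw df.
rewrite -deriveE //.
have dv := @diff_derivable _ _ _ _ _ (w - u) df.
rewrite /derive cvg_at_rightE //.
apply: limr_le.
  by apply: cvgP; apply: cvg_dnbhs_at_right; exact: dv.
near=> t.
have t0 : 0 < t by near: t; exact: nbhs_right_gt.
have t1 : t < 1 by near: t; exact: nbhs_right_lt.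
have -> : (freal f \o shift u) (t *: (w - u)) = freal f (t *: w + (1 - t) *: u).
  by rewrite /= scalerBr scalerBl scale1r addrA addrAC.
have H := @rconv u w t cu cw (introT andP (conj t0 t1)).
rewrite /GRing.scale /= ler_pdivrMl //.
lra.
Unshelve. all: by end_near.
Qed.
End Aux.

Section Eucl.
Variables (R : realType) (n : nat).

Lemma en_ge0 (v : 'cV[R]_n) : 0 <= eucl_norm v.
Proof. exact: sqrtr_ge0. Qed.

Lemma en_sq (v : 'cV[R]_n) : eucl_norm v ^+ 2 = \sum_i v i 0 ^+ 2.
Proof. by rewrite sqr_sqrtr // sumr_ge0 // => i _; exact: sqr_ge0. Qed.

Lemma enZ_sq (t : R) (v : 'cV[R]_n) : eucl_norm (t *: v) ^+ 2 = t ^+ 2 * eucl_norm v ^+ 2.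
Proof.
rewrite !en_sq mulr_sumr; apply: eq_bigr => i _.
by rewrite mxE exprMn.
Qed.

Lemma en0 : eucl_norm (0 : 'cV[R]_n) = 0.
Proof.
rewrite /eucl_norm big1 ?sqrtr0 // => i _; by rewrite mxE expr0n.
Qed.

Lemma en_coord (v : 'cV[R]_n) i : `|v i 0| <= eucl_norm v.
Proof.
rewrite -sqrtr_sqr ler_sqrt; last by rewrite sumr_ge0 // => j _; exact: sqr_ge0.
rewrite (bigD1 i) //= lerDl sumr_ge0 // => j _; exact: sqr_ge0.
Qed.

Lemma dist_le (x z : 'cV[R]_n) S : S z -> eucl_dist x S <= eucl_norm (x - z).
Proof.
move=> Sz; apply: ge_inf; last by exists z.
by exists 0 => _ [y _ ->]; exact: en_ge0.
Qed.

Lemma dist_ge0 (x : 'cV[R]_n) S : (exists z, S z) -> 0 <= eucl_dist x S.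
Proof.
move=> [z Sz]; apply: lb_le_inf; first by exists (eucl_norm (x - z)), z.
by move=> _ [y _ ->]; exact: en_ge0.
Qed.

Lemma dist_sq_bound (x : 'cV[R]_n) S (a b K : R) : (exists z, S z) -> 0 <= K ->
  (forall z, S z -> a <= b + K * eucl_norm (x - z) ^+ 2) ->
  a <= b + K * eucl_dist x S ^+ 2.
Proof.
move=> [z0 Sz0] K0 H.
have d0 := @dist_ge0 x S (ex_intro _ z0 Sz0).
case: (lerP a b) => ab.
  by apply: (le_trans ab); rewrite lerDl mulr_ge0 // exprn_ge0.
have Kp : 0 < K.
  rewrite lt_def K0 andbT; apply/eqP => K00; move: (H z0 Sz0).
  rewrite K00 mul0r addr0; lra.
have qq : 0 <= (a - b) / K by rewrite divr_ge0 // ?subr_ge0 ltW.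
set q := Num.sqrt ((a - b) / K).
have q0 : 0 <= q by exact: sqrtr_ge0.
have qd : q <= eucl_dist x S.
  apply: lb_le_inf; first by exists (eucl_norm (x - z0)), z0.
  move=> _ [z Sz ->].
  have s0 := en_ge0 (x - z).
  rewrite -(ger0_norm s0) -sqrtr_sqr ler_sqrt ?sqr_ge0 // ler_pdivrMr //.
  by have := H z Sz; lra.
have : q ^+ 2 <= eucl_dist x S ^+ 2 by rewrite !expr2; apply: ler_pM.
rewrite sqr_sqrtr // ler_pdivrMr // => h.
have : a - b <= K * eucl_dist x S ^+ 2 by rewrite mulrC.
lra.
Qed.
End Eucl.

Section Fiber.
Variables (R : realType) (m n : nat) (A : 'M[R]_(m, n)).

Lemma Abound (v : 'cV[R]_n) i : `|(A *m v) i 0| <= (\sum_j `|A i j|) * eucl_norm v.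
Proof.
rewrite mxE mulr_suml; apply: (le_trans (ler_norm_sum _ _ _)).
apply: ler_sum => j _; rewrite normrM ler_wpM2l //; exact: en_coord.
Qed.

Lemma dist_pos (u : 'cV[R]_m) (x z0 : 'cV[R]_n) : stdsimplex n x -> ~ Zfiber A u x ->
  Zfiber A u z0 -> 0 < eucl_dist x (Zfiber A u).
Proof.
move=> sx nZ Zz0.
have [i Hi] : exists i, (A *m x) i 0 != u i 0.
  apply: contrapT => H; apply: nZ; split => //.
  apply/matrixP => i j; rewrite (ord1 j).
  by apply/eqP; apply: contrapT => /negP Hn; apply: H; exists i.
set c := `|(A *m x) i 0 - u i 0|.
set K := 1 + \sum_j `|A i j|.
have c0 : 0 < c by rewrite normr_gt0 subr_eq0.
have K0 : 0 < K by rewrite ltr_pwDl // sumr_ge0.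
apply: (@lt_le_trans _ _ (c / K)); first by rewrite divr_gt0.
apply: lb_le_inf; first by exists (eucl_norm (x - z0)), z0.
move=> _ [z [sz Az] ->].
rewrite ler_pdivrMr //.
have e : (A *m (x - z)) i 0 = (A *m x) i 0 - u i 0.
  by rewrite -Az mulmxBr !mxE.
have := Abound (x - z) i; rewrite e -/c.
have := @en_ge0 _ _ (x - z).
have S0 : 0 <= \sum_j `|A i j| by rewrite sumr_ge0.
rewrite /K => s0 h.
apply: (le_trans h); nra.
Qed.
End Fiber.

Section Ereal.
Variable R : realType.
Local Open Scope ereal_scope.

Lemma esup_ub (S : set R) s : S s -> ereal_sup [set x%:E | x in S] < +oo ->
  (s <= fine (ereal_sup [set x%:E | x in S]))%R.
Proof.
move=> Ss lt.
have le : s%:E <= ereal_sup [set x%:E | x in S] by apply: ereal_sup_ubound; exists s.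
move: le lt; case: (ereal_sup _) => [r| |] //=; by rewrite lee_fin.
Qed.

Lemma esup_ge0 (S : set R) : (forall s, S s -> (0 <= s)%R) ->
  (0 <= fine (ereal_sup [set x%:E | x in S]))%R.
Proof.
move=> H.
have [[s Ss]|nS] := pselect (exists s, S s).
  have le : s%:E <= ereal_sup [set x%:E | x in S] by apply: ereal_sup_ubound; exists s.
  move: le; case: (ereal_sup _) => [r| |] //=; rewrite lee_fin => sr.
  exact: le_trans (H s Ss) sr.
have -> : S = set0 by apply/seteqP; split => // y Sy; exfalso; apply: nS; exists y.
by rewrite image_set0 ereal_sup0.
Qed.

Lemma einf_lb (S : set R) mu s : ereal_inf [set x%:E | x in S] = mu%:E -> S s -> (mu <= s)%R.
Proof.
move=> E Ss.
have le : ereal_inf [set x%:E | x in S] <= s%:E by apply: ereal_inf_lbound; exists s.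
by rewrite E lee_fin in le.
Qed.

Lemma einf_empty (S : set R) s : ereal_inf [set x%:E | x in S] = +oo -> ~ S s.
Proof.
move=> E Ss.
have le : ereal_inf [set x%:E | x in S] <= s%:E by apply: ereal_inf_lbound; exists s.
by rewrite E in le.
Qed.
End Ereal.

Theorem proposition4 (R : realType) (m n : nat) (A : 'M[R]_(m, n))
  (f : 'cV[R]_m -> \bar R) (x : nat -> 'cV[R]_n) :
  (exists i j : 'I_n, col i A != col j A) ->
  ext_convex f ->
  (forall u, convcols A u -> ext_differentiable_at f u) ->
  convcols A `<=` edom f ->
  (LfA f A < +oo)%E -> (0 < mustar f A)%E ->
  stdsimplex n (x 0%N) ->
  (forall k : nat, stdsimplex n (x k.+1) /\
     forall y, stdsimplex n y ->
       step_obj f A (fine (LfA f A)) (x k) (x k.+1)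
       <= step_obj f A (fine (LfA f A)) (x k) y) ->
  forall k : nat,
    freal f (A *m x k) - fstar f A
    <= (1 - rate_factor f A) ^+ k * (freal f (A *m x 0%N) - fstar f A).
Proof.
move=> _ fconv fdiff fdom Lfin mupos x0s hseq.
set L := fine (LfA f A).
have xs : forall k, stdsimplex n (x k) by case=> [|k] //; exact: (hseq k).1.
have cxs : forall k, convcols A (A *m x k) by move=> k; exists (x k).
have dfx : forall u, convcols A u -> differentiable (freal f) u by move=> u /fdiff [].
have L0 : 0 <= L.
  apply: esup_ge0 => _ [u [y [cu sy _ ->]]].
  have cy : convcols A (A *m y) by exists y.
  have g := @grad_ineq _ _ _ A f fconv fdom _ _ cu cy (dfx _ cu).
  rewrite divr_ge0 ?sqr_ge0 // mulr_ge0 //; lra.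
have hstep : forall k y, stdsimplex n y -> freal f (A *m x k.+1) <= step_obj f A L (x k) y.
  move=> k y sy; apply: le_trans ((hseq k).2 y sy).
  rewrite /step_obj mulmxBr -/L.
  have sq0 : 0 <= L / 2 * eucl_norm (x k.+1 - x k) ^+ 2.
    by rewrite mulr_ge0 ?sqr_ge0 // divr_ge0.
  have [Zx|nZx] := pselect (Zfiber A (A *m x k) (x k.+1)).
    case: Zx => _ ->; rewrite subrr linear0 addr0; lra.
  have Zk : Zfiber A (A *m x k) (x k) by split.
  have Dpos := @dist_pos _ _ _ A _ _ _ (xs k.+1) nZx Zk.
  have Dle := @dist_le _ _ (x k.+1) (x k) _ Zk.
  set D := eucl_dist (x k.+1) (Zfiber A (A *m x k)) in Dpos Dle.
  set G := freal f (A *m x k.+1) - freal f (A *m x k) - 'd (freal f) (A *m x k) (A *m x k.+1 - A *m x k).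
  have rle := @esup_ub _ _ (2 * G / D ^+ 2)
    (ex_intro _ (A *m x k) (ex_intro _ (x k.+1) (And4 (cxs k) (xs k.+1) nZx erefl))) Lfin.
  rewrite -/L ler_pdivrMr ?exprn_gt0 // in rle.
  have DN : D ^+ 2 <= eucl_norm (x k.+1 - x k) ^+ 2.
    by rewrite !expr2; apply: ler_pM => //; apply: ltW.
  have := ler_wpM2l L0 DN.
  rewrite /G in rle; lra.
have hrate : forall k, freal f (A *m x k.+1) - fstar f A
    <= (1 - rate_factor f A) * (freal f (A *m x k) - fstar f A).
  move=> k.
  set fs := fstar f A.
  case Em: (mustar f A) => [mu| |]; last by rewrite Em in mupos.
  2:{ have allZ : forall y, stdsimplex n y -> Zstar f A y.
        move=> y sy; apply: contrapT => nZ.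
        exact: (@einf_empty _ _ _ Em (ex_intro _ y (And3 sy nZ erefl))).
      rewrite (allZ _ (xs k.+1)).2 (allZ _ (xs k)).2 subrr mulr0; exact: lexx. }
  have mu0 : 0 < mu by rewrite Em lte_fin in mupos.
  set h := fun j => freal f (A *m x j) - fs.
  rewrite -/(h k) -/(h k.+1).
  set d := eucl_dist (x k) (Zstar f A).
  have [Zne [hk0 hkd]] : (exists z, Zstar f A z) /\ (0 <= h k /\ mu / 2 * d ^+ 2 <= h k).
    have [Zk|nZk] := pselect (Zstar f A (x k)).
      have hk : h k = 0 by rewrite /h Zk.2 subrr.
      have d0 : d = 0.
        apply: le_anti; apply/andP; split.
          by have := @dist_le _ _ (x k) (x k) _ Zk; rewrite subrr en0.
        by apply: dist_ge0; exists (x k).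
      by rewrite hk d0 expr0n /= mulr0; split => //; exists (x k).
    have mule := @einf_lb _ _ _ (2 * h k / d ^+ 2) Em
      (ex_intro _ (x k) (And3 (xs k) nZk erefl)).
    have dn0 : d != 0.
      apply/eqP => d0; move: mule; rewrite d0 expr0n /= invr0 mulr0; lra.
    have Zne : exists z, Zstar f A z.
      apply: contrapT => nZ; move/eqP: dn0; apply; rewrite /d /eucl_dist.
      have -> : [set d | exists2 z, Zstar f A z & d = eucl_norm (x k - z)] = set0.
        by apply/seteqP; split => // r [z Zz _]; apply: nZ; exists z.
      exact: inf0.
    have dpos : 0 < d by rewrite lt_def dn0 /=; exact: dist_ge0.
    have d2 := exprn_gt0 2 dpos.
    rewrite ler_pdivlMr // in mule.
    have := mulr_ge0 (ltW mu0) (ltW d2).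
    split => //; split; lra.
  have key : forall t, 0 <= t <= 1 -> h k.+1 <= (1 - t + L * t ^+ 2 / mu) * h k.
    move=> t /andP[t0 t1].
    have H1 : h k.+1 <= (1 - t) * h k + (L * t ^+ 2 / 2) * d ^+ 2.
      rewrite /d; apply: dist_sq_bound => //.
        by rewrite divr_ge0 // mulr_ge0 // sqr_ge0.
      move=> z Zz.
      have sy := @simplex_conv _ _ z (x k) t Zz.1 (xs k) (introT andP (conj t0 t1)).
      have := hstep k _ sy; rewrite /step_obj.
      have -> : t *: z + (1 - t) *: x k - x k = (- t) *: (x k - z).
        by apply/matrixP => i j; rewrite !mxE; ring.
      rewrite enZ_sq sqrrN -scalemxAr mulmxBr scaleNr -scalerN opprB linearZ /=.
      have cz : convcols A (A *m z) by exists z; [exact: Zz.1|].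
      have g := @grad_ineq _ _ _ A f fconv fdom _ _ (cxs k) cz (dfx _ (cxs k)).
      have tg := ler_wpM2l t0 g.
      rewrite Zz.2 in tg.
      move=> H; rewrite /h.
      have e : t *: 'd (freal f) (A *m x k) (A *m z - A *m x k)
             = t * 'd (freal f) (A *m x k) (A *m z - A *m x k) by [].
      rewrite e in H; lra.
    have p0 : 0 <= L * t ^+ 2 / mu by rewrite divr_ge0 ?mulr_ge0 ?sqr_ge0 // ltW.
    have := ler_wpM2l p0 hkd.
    have -> : L * t ^+ 2 / mu * (mu / 2 * d ^+ 2) = L * t ^+ 2 / 2 * d ^+ 2.
      by field; rewrite gt_eqF.
    move=> H2; lra.
  have rf : rate_factor f A = if 0 < L then Num.min (mu / (4 * L)) (1 / 2) else 1 / 2.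
    by rewrite /rate_factor Em.
  rewrite rf; have [Lp|Lnp] := ltP 0 L.
    have [le4|gt4] := leP (mu / (4 * L)) (1 / 2).

      have mu2 : mu <= 2 * L by move: le4; rewrite ler_pdivrMr ?mulr_gt0 //; lra.
      have t0 : 0 <= mu / (2 * L) by apply: divr_ge0; [exact: ltW | rewrite mulr_ge0 // ltW].
      have t1 : mu / (2 * L) <= 1 by rewrite ler_pdivrMr ?mulr_gt0 //; lra.
      have := key _ (introT andP (conj t0 t1)).
      have -> : 1 - mu / (2 * L) + L * (mu / (2 * L)) ^+ 2 / mu = 1 - mu / (4 * L).
        by field; rewrite !gt_eqF.
      done.

    have := key 1 (introT andP (conj ler01 (lexx 1))).
    have -> : 1 - 1 + L * 1 ^+ 2 / mu = L / mu by rewrite subrr add0r expr1n mulr1.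
    have Lm : L / mu <= 1 / 2.
      move: gt4; rewrite ltr_pdivlMr ?mulr_gt0 // ler_pdivrMr //; lra.
    have := ler_wpM2r hk0 Lm; lra.
  have L00 : L = 0 by apply: le_anti; rewrite Lnp L0.
  have := key 1 (introT andP (conj ler01 (lexx 1))).
  rewrite L00 mul0r mul0r addr0 subrr mul0r => H; lra.
have c12 : rate_factor f A <= 1 / 2.
  by rewrite /rate_factor; case: ifP => _ //; rewrite ge_min lexx orbT.
elim=> [|k IH]; first by rewrite expr0 mul1r.
apply: le_trans (hrate k) _; rewrite exprS -mulrA.
by apply: ler_wpM2l => //; lra.
Qed.
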